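(* If $S$ is a simply-connected shape in the triangular grid with at least two points, then $S$ has at least one strictly convex and erodable (SCE) point with respect to $S$.
   Context: The triangular grid $G$ has as vertices (''points'') the points of the regular triangular lattice in the plane, two points adjacent iff at unit distance; each point has six incident edges, cyclically ordered clockwise. A shape is a finite set of points, identified with its induced subgraph. A connected shape $S$ partitions the plane into faces; the unique unbounded one is the outer face, and a bounded face containing a grid point not in $S$ is a hole. $S$ is simply-connected if it is connected and has no holes. The outer boundary of $S$ is the set of points of $S$ lying on the boundary of the outer face. A boundary point of $S$ is a point of $S$ adjacent to some point not in $S$. For a boundary point $v$, a local boundary $B$ of $v$ (w.r.t. $S$) is a maximal clockwise cyclic interval of consecutive edges incident to $v$ whose other endpoints are not in $S$; $|B|$ is its number of edges, and the boundary count of $v$ w.r.t. $B$ is $c(v,B)=|B|-2$. $v$ is strictly convex w.r.t. $B$ if $c(v,B)>0$. A point $v \in S$ is redundant if the subgraph induced by the neighbors of $v$ in $S$ is connected; it is erodable w.r.t. $S$ if it is redundant and on the outer boundary of $S$ (such a point has a single local boundary $B$). An erodable point that is strictly convex w.r.t. its single local boundary is called strictly convex and erodable (SCE) w.r.t. $S$. *)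

(* Defs.v *)
From HB Require Import structures.
From mathcomp Require Import all_boot all_order all_algebra.
From mathcomp Require Import finmap.
Set Implicit Arguments. Unset Strict Implicit. Unset Printing Implicit Defensive.
Import Order.TTheory GRing.Theory Num.Theory.
Local Open Scope fset_scope.

(* Points of the triangular lattice: (q, r) represents q * (1,0) + r * (1/2, sqrt 3/2). *)
Definition point := (int * int)%type.

(* The six unit directions, listed in clockwise cyclic order
   (angles 0, -60, -120, 180, 120, 60 degrees). *)
Definition dirs : seq point :=
  [:: (1, 0); (1, -1); (0, -1); (-1, 0); (-1, 1); (0, 1)]%R.

Definition nbr (v : point) (n : nat) : point :=
  let d := nth (0, 0)%R dirs (n %% 6) in ((v.1 + d.1)%R, (v.2 + d.2)%R).

Definition adj : rel point := fun u w => [exists i : 'I_6, w == nbr u i].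

Definition walk_in (P : pred point) (u w : point) : Prop :=
  exists p : seq point, [&& path adj u p, last u p == w & all P (u :: p)].

Definition induced_connected (P : pred point) : Prop :=
  forall u w, P u -> P w -> walk_in P u w.

Notation shape := {fset point}.

Definition shape_connected (S : shape) : Prop :=
  induced_connected (fun x => x \in S).

(* A grid point u not in S lies in the outer (unbounded) face of S: the faces of
   the plane cut by S that contain grid points correspond to the connected
   components of G restricted to the points not in S; the outer face is the
   one whose component is unbounded. *)
Definition in_outer_face (S : shape) (u : point) : Prop :=
  u \notin S /\
  forall n : nat, exists w : point,
    walk_in (fun x => x \notin S) u w /\ (n <= absz w.1 + absz w.2)%N.

Definition has_hole (S : shape) : Prop :=
  exists u : point, u \notin S /\ ~ in_outer_face S u.

Definition simply_connected (S : shape) : Prop :=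
  shape_connected S /\ ~ has_hole S.

(* v lies on the outer boundary of S: v is in S and lies on the boundary of the
   outer face, i.e. one of the six triangle wedges at v belongs to the outer
   face, i.e. some neighbour of v lies in the outer face. *)
Definition on_outer_boundary (S : shape) (v : point) : Prop :=
  v \in S /\ exists i : 'I_6, in_outer_face S (nbr v i).

Definition boundary_point (S : shape) (v : point) : Prop :=
  v \in S /\ exists i : 'I_6, nbr v i \notin S.

(* A local boundary of v: the maximal clockwise cyclic interval of the k edges
   in directions i, i+1, ..., i+k-1 (mod 6), all leading out of S. *)
Definition local_boundary (S : shape) (v : point) (i k : nat) : Prop :=
  [/\ boundary_point S v, (i < 6)%N, (1 <= k <= 6)%N,
      (forall j, (j < k)%N -> nbr v (i + j) \notin S)
    & ((k < 6)%N -> nbr v (i + 5) \in S /\ nbr v (i + k) \in S)].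

Definition boundary_count (k : nat) : int := (k%:Z - 2)%R.

Definition redundant (S : shape) (v : point) : Prop :=
  v \in S /\ induced_connected (fun u => (u \in S) && adj v u).

Definition erodable (S : shape) (v : point) : Prop :=
  redundant S v /\ on_outer_boundary S v.

Definition SCE (S : shape) (v : point) : Prop :=
  erodable S v /\
  exists i k, local_boundary S v i k /\ (0 < boundary_count k)%R.

(* Main.v *)
Require Import Defs.
From mathcomp Require Import all_boot all_order all_algebra finmap.
From mathcomp Require Import zify.
From Stdlib Require Import ClassicalEpsilon Classical.
Import Order.TTheory GRing.Theory Num.Theory.
Set Implicit Arguments. Unset Strict Implicit. Unset Printing Implicit Defensive.

Module MA.
Local Open Scope fset_scope.

Ltac bsolve := first [ done | (exfalso; lia) | (case: eqP => ?; bsolve) | (case: ltP => ?; bsolve) | (case: leP => ?; bsolve) ].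

Lemma nbr_mod v i : nbr v i = nbr v (i %% 6).
Proof. by rewrite /nbr modn_mod. Qed.

Lemma adj_nbr v i : adj v (nbr v i).
Proof.
apply/existsP; exists (Ordinal (ltn_pmod i (isT : 0 < 6)%N)).
by rewrite /= -nbr_mod.
Qed.

Lemma adjP u w : adj u w -> exists2 j, (j < 6)%N & w = nbr u j.
Proof. by case/existsP => j /eqP ->; exists j. Qed.

Lemma adj_sym u w : adj u w -> adj w u.
Proof.
case/adjP => j hj ->; case: u => a b.
have h : forall k, nbr (nbr (a,b) j) k = (a, b) -> adj (nbr (a, b) j) (a, b).
  by move=> k e; rewrite -[X in adj _ X]e; apply: adj_nbr.
case: j hj h => [|[|[|[|[|[|j]]]]]] hj h //;
 [apply: (h 3%N)|apply: (h 4%N)|apply: (h 5%N)|apply: (h 0%N)|apply: (h 1%N)|apply: (h 2%N)];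
 rewrite /nbr /=; congr pair; lia.
Qed.

Section Walks.
Implicit Types (P Q : pred point) (u w x : point).

Lemma walk_refl P u : P u -> walk_in P u u.
Proof. by move=> h; exists [::]; rewrite /= eqxx h. Qed.

Lemma walk_ends P u w : walk_in P u w -> P u /\ P w.
Proof.
case=> p /and3P [_ /eqP <- hp]; split; first by case/andP: hp.
by move: hp; rewrite -[u :: p]/(u :: p) => /allP; apply; rewrite mem_last.
Qed.

Lemma walk_cons P u w x : adj u w -> P u -> walk_in P w x -> walk_in P u x.
Proof.
move=> huw hu [p /and3P [hp hl ha]]; exists (w :: p).
by rewrite /= huw hp hl hu.
Qed.

Lemma walk_mono P Q u w : (forall x, P x -> Q x) -> walk_in P u w -> walk_in Q u w.
Proof.
move=> hPQ [p /and3P [hp hl ha]]; exists p; apply/and3P; split => //.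
by apply/allP => x /(allP ha) /hPQ.
Qed.

Lemma walk_ext P Q u w : (forall x, P x = Q x) -> walk_in P u w -> walk_in Q u w.
Proof. by move=> h; apply: walk_mono => x; rewrite h. Qed.

Lemma walk_trans P u w x : walk_in P u w -> walk_in P w x -> walk_in P u x.
Proof.
case=> p; elim: p u => [|y p IH] u /and3P [hp hl ha] hwx.
  by move: hl => /= /eqP ->.
move: hp ha => /= /andP [huy hp] /andP [hu ha].
apply: walk_cons huy hu _; apply: IH => //; exact/and3P.
Qed.

Lemma walk_step P u w x : walk_in P u w -> adj w x -> P x -> walk_in P u x.
Proof.
move=> h hwx hx; have [_ hw] := walk_ends h.
exact: (walk_trans h (walk_cons hwx hw (walk_refl hx))).
Qed.

Lemma walk_sym P u w : walk_in P u w -> walk_in P w u.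
Proof.
case=> p; elim: p u => [|y p IH] u /and3P [hp hl ha].
  by move: hl => /= /eqP <-; apply: walk_refl; case/andP: ha.
move: hp ha => /= /andP [huy hp] /andP [hu ha].
apply: walk_step (adj_sym huy) hu; apply: IH; exact/and3P.
Qed.

End Walks.

Fixpoint nst (E : point -> point -> bool) (x : point) (s : seq point) : nat :=
  if s is y :: s' then (E x y + nst E y s')%N else 0%N.

Lemma flip_par (B : pred point) x s :
  odd (nst (fun y z => B y != B z) x s) = (B x != B (last x s)).
Proof.
elim: s x => [|y s IH] x /=; first by case: (B x).
rewrite oddD IH; case: (B x); case: (B y); case: (B (last y s)) => //.
Qed.

Lemma nst_xor (E1 E2 E3 : point -> point -> bool) x s :
  path (fun y z => E1 y z (+) E2 y z == E3 y z) x s ->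
  odd (nst E1 x s) (+) odd (nst E2 x s) = odd (nst E3 x s).
Proof.
elim: s x => [|y s IH] x //= /andP [/eqP h hp].
rewrite !oddD -IH // -h.
by case: (E1 x y); case: (E2 x y); case: (odd (nst E1 y s)); case: (odd (nst E2 y s)).
Qed.

Lemma nst0 (E : point -> point -> bool) x s :
  path (fun y z => ~~ E y z) x s -> nst E x s = 0%N.
Proof.
elim: s x => [|y s IH] x //= /andP [h hp].
by rewrite (negbTE h) IH.
Qed.

Lemma nst_cat E x s1 s2 : nst E x (s1 ++ s2) = (nst E x s1 + nst E (last x s1) s2)%N.
Proof. elim: s1 x => [|y s IH] x //=; by rewrite IH addnA. Qed.

Lemma path_good (G : pred point) x s : path adj x s -> all G (x :: s) ->
  path (fun y z => [&& adj y z, G y & G z]) x s.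
Proof.
elim: s x => [|y s IH] x //= /andP [hxy hp] /and3P [hx hy ha].
rewrite hxy hx hy /=; apply: IH => //; by rewrite /= hy.
Qed.

Local Open Scope ring_scope.

Definition ray (x y z : point) : bool :=
  ((y.2 == x.2) && (z.2 == x.2 + 1) && (x.1 < y.1)) ||
  ((z.2 == x.2) && (y.2 == x.2 + 1) && (x.1 < z.1)).

Ltac bsolve2 := first [ by [] | (exfalso; lia) | (case: eqP => ?; bsolve2) | (case: ltP => ?; bsolve2) | (case: leP => ?; bsolve2) ].

Lemma step0 (x y z : point) : adj y z -> y != nbr x 0 -> z != nbr x 0 ->
  ray x y z (+) ray (nbr x 0) y z == false.
Proof.
case/adjP => j hj ->; case: x y => q r [a b].
case: j hj => [|[|[|[|[|[|j]]]]]] hj //; rewrite /nbr /ray /= !xpair_eqE; bsolve2.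
Qed.

Definition B5 (x p : point) : bool := (p.2 == x.2 + 1) && (x.1 < p.1).
Definition B4 (x p : point) : bool := (p.2 == x.2 + 1) && (x.1 <= p.1).

Lemma step5 (x y z : point) : adj y z -> y != nbr x 5 -> z != nbr x 5 ->
  ray x y z (+) ray (nbr x 5) y z == (B5 x y != B5 x z).
Proof.
case/adjP => j hj ->; case: x y => q r [a b].
case: j hj => [|[|[|[|[|[|j]]]]]] hj //; rewrite /nbr /ray /B5 /= !xpair_eqE; bsolve2.
Qed.

Lemma step4 (x y z : point) : adj y z -> y != x -> z != x -> y != nbr x 4 -> z != nbr x 4 ->
  ray x y z (+) ray (nbr x 4) y z == (B4 x y != B4 x z).
Proof.
case/adjP => j hj ->; case: x y => q r [a b].
case: j hj => [|[|[|[|[|[|j]]]]]] hj //; rewrite /nbr /ray /B4 /= !xpair_eqE; bsolve2.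
Qed.

Lemma nbr_inv x k : nbr (nbr x k) (k + 3) = x.
Proof.
rewrite (nbr_mod x k) (nbr_mod _ (k + 3)) -modnDml.
have : (k %% 6 < 6)%N by rewrite ltn_pmod.
case: x => a b; move: (k %% 6)%N => j.
case: j => [|[|[|[|[|[|j]]]]]] hj //; rewrite /nbr /=; congr pair; lia.
Qed.

Lemma notin_all (x : point) s : x \notin s -> all (fun p => p != x) s.
Proof. by move=> hx; apply/allP => p hp; apply: contraNneq hx => <-. Qed.


End MA.
Import MA.

Module MC.
Local Open Scope ring_scope.

Lemma nst_false x s : nst (fun _ _ => false) x s = 0%N.
Proof. by elim: s x => //= y s IH x; rewrite IH. Qed.

Lemma stepfar (w y z : point) (M : nat) : adj y z -> (absz y.1 < M)%N -> (absz y.2 < M)%N ->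
  (absz z.1 < M)%N -> (absz z.2 < M)%N -> (M <= absz w.2)%N -> ~~ ray w y z.
Proof.
case/adjP => j hj ->; case: w y => q r [a b].
case: j hj => [|[|[|[|[|[|j]]]]]] hj //; rewrite /nbr /ray /= => *; bsolve2.
Qed.
Lemma stepfar1 (w y z : point) (M : nat) : adj y z -> (absz y.1 < M)%N -> (absz y.2 < M)%N ->
  (absz z.1 < M)%N -> (absz z.2 < M)%N -> (M%:Z <= w.1) -> ~~ ray w y z.
Proof.
case/adjP => j hj ->; case: w y => q r [a b].
case: j hj => [|[|[|[|[|[|j]]]]]] hj //; rewrite /nbr /ray /= => *; bsolve2.
Qed.
Lemma stepfar2 (w y z : point) (M : nat) : adj y z -> (absz y.1 < M)%N -> (absz y.2 < M)%N ->
  (absz z.1 < M)%N -> (absz z.2 < M)%N -> (w.1 <= - (M%:Z)) -> 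
  ray w y z == ((w.2 < y.2) != (w.2 < z.2)).
Proof.
case/adjP => j hj ->; case: w y => q r [a b].
case: j hj => [|[|[|[|[|[|j]]]]]] hj //; rewrite /nbr /ray /= => *; bsolve2.
Qed.

Lemma nst_eq (E1 E2 : point -> point -> bool) x s :
  path (fun y z => E1 y z == E2 y z) x s -> nst E1 x s = nst E2 x s.
Proof. elim: s x => [|y s IH] x //= /andP [/eqP -> h]; by rewrite IH. Qed.

Fixpoint bnd (s : seq point) : nat :=
  if s is p :: s' then maxn (absz p.1 + absz p.2).+1 (bnd s') else 0%N.

Lemma bndP s p : p \in s -> (absz p.1 < bnd s)%N && (absz p.2 < bnd s)%N.
Proof.
elim: s => [|q s IH] //; rewrite inE => /orP [/eqP -> | /IH] /=; lia.
Qed.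

Section Parity.
Variables (c0 : point) (cs : seq point).
Hypothesis hpath : path adj c0 cs.
Hypothesis hclosed : last c0 cs = c0.

Definition par x := odd (nst (ray x) c0 cs).

Lemma par_045 x k : (k == 0)%N || (k == 4)%N || (k == 5)%N ->
  x \notin c0 :: cs -> nbr x k \notin c0 :: cs -> par x = par (nbr x k).
Proof.
move=> hk hx hy; have ax := notin_all hx; have ay := notin_all hy.
have ga := path_good hpath (etrans (all_predI _ _ _) (introT andP (conj ax ay))).
have fin : forall E3 : point -> point -> bool, (forall y z, [&& adj y z, (y != x) && (y != nbr x k) & (z != x) && (z != nbr x k)] -> ray x y z (+) ray (nbr x k) y z == E3 y z) ->
   odd (nst E3 c0 cs) = false -> par x = par (nbr x k).
  move=> E3 hE h0; have := nst_xor (sub_path hE ga); rewrite h0 /par.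
  by case: (odd (nst (ray x) c0 cs)); case: (odd (nst (ray (nbr x k)) c0 cs)).
case/orP: hk => [/orP [] | ] /eqP hk; subst k.
- apply: (fin (fun _ _ => false)); last by rewrite nst_false.
  move=> y z /and3P [h /andP [_ h1] /andP [_ h2]]; exact: step0.
- apply: (fin (fun y z => B4 x y != B4 x z)); last by rewrite flip_par hclosed eqxx.
  move=> y z /and3P [h /andP [h1 h2] /andP [h3 h4]]; exact: step4.
- apply: (fin (fun y z => B5 x y != B5 x z)); last by rewrite flip_par hclosed eqxx.
  move=> y z /and3P [h /andP [_ h1] /andP [_ h2]]; exact: step5.
Qed.

Lemma par_nbr x k : (k < 6)%N ->
  x \notin c0 :: cs -> nbr x k \notin c0 :: cs -> par x = par (nbr x k).
Proof.
move=> hk hx hy.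
have gen : forall m, (m == 0)%N || (m == 4)%N || (m == 5)%N -> nbr (nbr x k) m = x -> par x = par (nbr x k).
  move=> m hm e; rewrite -{1}e; symmetry; apply: par_045 => //; by rewrite e.
case: k hk hy gen => [|[|[|[|[|[|k]]]]]] hk hy gen //; try by apply: par_045.
- by apply: (gen 4%N) => //; exact: (nbr_inv x 1).
- by apply: (gen 5%N) => //; exact: (nbr_inv x 2).
- by apply: (gen 0%N) => //; exact: (nbr_inv x 3).
Qed.

Lemma par_far w : (2 * bnd (c0 :: cs) <= absz w.1 + absz w.2)%N -> par w = false.
Proof.
set M := bnd (c0 :: cs) => hw.
have hall : all (fun p => (absz p.1 < M)%N && (absz p.2 < M)%N) (c0 :: cs).
  by apply/allP => p /bndP.
have ga := path_good hpath hall.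
have [h2|h2] := leqP M (absz w.2).
  rewrite /par nst0 //; apply: sub_path ga => y z /and3P [h /andP [h1 h3] /andP [h4 h5]].
  exact: stepfar h1 h3 h4 h5 h2.
have [h1|h1] := lerP (M%:Z) w.1.
  rewrite /par nst0 //; apply: sub_path ga => y z /and3P [h /andP [h3 h4] /andP [h5 h6]].
  exact: stepfar1 h3 h4 h5 h6 h1.
have h1' : w.1 <= - (M%:Z) by lia.
rewrite /par (@nst_eq _ (fun y z => (w.2 < y.2) != (w.2 < z.2))).
  by rewrite flip_par hclosed eqxx.
apply: sub_path ga => y z /and3P [h /andP [h3 h4] /andP [h5 h6]].
exact: stepfar2 h3 h4 h5 h6 h1'.
Qed.

Lemma par_walk (P : pred point) u w : (forall p, P p -> p \notin c0 :: cs) ->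
  walk_in P u w -> par u = par w.
Proof.
move=> hP [p]; elim: p u => [|y p IH] u /and3P [hp /eqP hl ha]; first by rewrite -hl.
move: hp ha => /= /andP [huy hp] /andP [hu ha].
case/adjP: huy hp hl ha => j hj -> hp hl ha.
rewrite (par_nbr hj) ?hP //; last by case/andP: ha.
apply: IH; apply/and3P; split => //; exact/eqP.
Qed.

End Parity.

End MC.
Import MC.

Module ME.
Local Open Scope fset_scope.

Definition holefree (S : {fset point}) := forall u, u \notin S -> in_outer_face S u.
Definition lexlt (y v : point) := ((y.2 < v.2) || ((y.2 == v.2) && (y.1 < v.1)))%R.
Definition topright (S : {fset point}) v := v \in S /\ forall x, x \in S -> x != v -> lexlt x v.

Lemma step_tr (v y z : point) : adj y z -> lexlt y v -> lexlt z v -> ~~ ray (nbr v 2) y z.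
Proof.
case/adjP => j hj ->; case: v y => q r [a b].
case: j hj => [|[|[|[|[|[|j]]]]]] hj //; rewrite /nbr /ray /lexlt /= => *; bsolve2.
Qed.

Lemma ray_a v : ray (nbr v 2) v (nbr v 1) = true.
Proof. case: v => q r; rewrite /ray /nbr /=; bsolve2. Qed.
Lemma ray_b v : ray (nbr v 2) (nbr v 3) v = false.
Proof. case: v => q r; rewrite /ray /nbr /=; bsolve2. Qed.

Lemma bad_sep S v : holefree S -> topright S v -> nbr v 2 \notin S ->
  ~ walk_in (fun x => (x \in S) && (x != v)) (nbr v 1) (nbr v 3).
Proof.
move=> hS [hv htr] hu [p /and3P [hp /eqP hl ha]].
set cs := nbr v 1 :: p ++ [:: v].
have hpath : path adj v cs.
  rewrite /= adj_nbr /= cat_path hp /= hl andbT; exact: adj_sym (adj_nbr _ _).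
have hclosed : last v cs = v by rewrite /= last_cat.
have hcyc : forall x, x \notin S -> x \notin v :: cs.
  move=> x hx; apply/negP => hin; move/negP: hx; apply.
  move: hin; rewrite inE => /orP [/eqP -> //|].
  rewrite /cs -cat_cons mem_cat => /orP [hx'|]; first by case/andP: (allP ha _ hx').
  by rewrite inE => /eqP ->.
have hpu : par v cs (nbr v 2) = true.
  rewrite /par /= nst_cat hl /= (@nst0 _ _ p).
    by rewrite ray_a ray_b.
  apply: sub_path (path_good hp (G := fun x => (x \in S) && (x != v)) ha) => y z.
  case/and3P => h /andP [hy1 hy2] /andP [hz1 hz2].
  by apply: step_tr h (htr _ hy1 hy2) (htr _ hz1 hz2).
have [_ ] := hS _ hu.
case/(_ (2 * bnd (v :: cs))%N) => w [hw hfar].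
have := par_walk hpath hclosed (P := fun x => x \notin S) hcyc hw.
by rewrite hpu par_far.
Qed.

End ME.
Import ME.

Module MF.
Local Open Scope fset_scope.

Definition pb (P : Prop) : bool := if excluded_middle_informative P then true else false.
Lemma pbP (P : Prop) : pb P <-> P.
Proof. by rewrite /pb; case: excluded_middle_informative. Qed.

Lemma walk_comp (P : pred point) x y : walk_in P x y ->
  walk_in (fun z => P z && pb (walk_in P x z)) x y.
Proof.
case=> p; elim: p x => [|y1 p IH] x /and3P [hp hl ha].
  move: hl => /= /eqP <-; case/andP: ha => hx _; apply: walk_refl; rewrite hx /=.
  by apply/pbP; apply: walk_refl.
move: hp ha => /= /andP [hxy hp] /andP [hx ha].
have h1 : walk_in P x y1 by apply: walk_cons hxy hx (walk_refl _); case/andP: ha.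
apply: walk_cons hxy _ _.
  by rewrite hx /=; apply/pbP; apply: walk_refl.
apply: walk_mono (IH y1 _) => [z /andP [hz /pbP hw]|]; last by apply/and3P.
by rewrite hz /=; apply/pbP; apply: walk_trans h1 hw.
Qed.

Lemma walk_to (P : pred point) x v : walk_in P x v -> x != v ->
  exists2 y, adj y v & walk_in (fun z => P z && (z != v)) x y.
Proof.
case=> p; elim: p x => [|y1 p IH] x /and3P [hp hl ha] hxv.
  by move: hl hxv => /= ->.
move: hp ha => /= /andP [hxy hp] /andP [hx ha].
have [e|ne] := eqVneq y1 v.
  by exists x; [rewrite -e | apply: walk_refl; rewrite hx hxv].
case: (IH y1) => //; first by apply/and3P.
move=> y hyv hw; exists y => //; apply: walk_cons hxy _ hw; by rewrite hx hxv.
Qed.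

Section Cut.
Variables (S : {fset point}) (v a b e : point).
Hypotheses (hS : holefree S) (hconn : shape_connected S) (hv : v \in S)
  (haS : a \in S) (hav : a != v) (hbS : b \in S) (hbv : b != v)
  (hN : forall y, y \in S -> adj v y -> y = a \/ y = b)
  (hsep : ~ walk_in (fun x => (x \in S) && (x != v)) a b)
  (hva : adj v a) (hvb : adj v b) (hae : adj a e) (heS : e \notin S).

Let Sv := fun x => (x \in S) && (x != v).
Definition cutT := [fset x in S | (x == v) || pb (walk_in Sv b x)].

Lemma cutT_sub x : x \in cutT -> x \in S.
Proof. by rewrite !inE => /andP []. Qed.

Lemma cutT_v : v \in cutT.
Proof. by rewrite !inE hv eqxx. Qed.

Lemma cutT_b : b \in cutT.
Proof. by rewrite !inE hbS /=; apply/orP; right; apply/pbP; apply: walk_refl; rewrite /Sv hbS hbv. Qed.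

Lemma cutT_a : a \notin cutT.
Proof.
rewrite !inE haS (negbTE hav) /=; apply/negP => /pbP h; apply: hsep; exact: walk_sym.
Qed.

Lemma cutT_card : (2 <= #|` cutT| < #|` S|)%N.
Proof.
apply/andP; split.
  have -> : 2%N = #|` [fset v; b]| by rewrite cardfs2 eq_sym hbv.
  apply: fsubset_leq_card; apply/fsubsetP => x /fset2P [] ->.
  exact: cutT_v. exact: cutT_b.
rewrite (cardfsD1 a S) haS add1n ltnS; apply: fsubset_leq_card; apply/fsubsetP => x hx.
rewrite !inE (cutT_sub hx) andbT; apply: contraNneq cutT_a => <-; exact: hx.
Qed.

Lemma cutT_walk x : x \in cutT -> x != v -> walk_in Sv b x.
Proof. by rewrite !inE => /andP [_ /orP [/eqP -> | /pbP //]]; rewrite eqxx. Qed.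

Lemma cutT_conn : shape_connected cutT.
Proof.
have hv' : forall x, x \in cutT -> walk_in (fun y => y \in cutT) v x.
  move=> x hx; have [->|nx] := eqVneq x v; first by apply: walk_refl; exact: cutT_v.
  apply: walk_cons hvb cutT_v _.
  apply: walk_mono (walk_comp (cutT_walk hx nx)) => z /andP [/andP [hz _] hw].
  suff : z \in cutT by []. by rewrite !inE hz hw orbT.
move=> x y hx hy; apply: walk_trans (walk_sym (hv' _ hx)) (hv' _ hy).
Qed.

Lemma cutT_nbr w i : w \in cutT -> w != v -> (nbr w i \in S) = (nbr w i \in cutT).
Proof.
move=> hw nw; apply/idP/idP; last exact: cutT_sub.
move=> h; have [e'|ne] := eqVneq (nbr w i) v; first by rewrite e' cutT_v.
rewrite !inE h /=; apply/orP; right; apply/pbP.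
apply: walk_step (cutT_walk hw nw) (adj_nbr _ _) _; by rewrite /Sv h ne.
Qed.

Lemma outer_mono (T : {fset point}) x : (forall y, y \in T -> y \in S) ->
  in_outer_face S x -> in_outer_face T x.
Proof.
move=> hT [hx hf]; split; first by apply: contra hx; exact: hT.
move=> n; case: (hf n) => w [hw hn]; exists w; split => //.
by apply: walk_mono hw => y; apply: contra; exact: hT.
Qed.

Lemma cutT_holefree : holefree cutT.
Proof.
move=> x hx; have [xS|xS] := boolP (x \in S); last first.
  exact: outer_mono cutT_sub (hS xS).
have xv : x != v by apply: contraNneq hx => ->; exact: cutT_v.
have [y hyv hw] := walk_to (hconn xS hv) xv.
have hy : y = a.
  have [_ /andP [hyS _]] := walk_ends hw.
  case: (hN hyS (adj_sym hyv)) => [//|eb]; subst y.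
  exfalso; move/negP: hx; apply; rewrite !inE xS; apply/orP; right; apply/pbP.
  exact: walk_sym.
subst y.
have hxe : walk_in (fun z => z \notin cutT) x e.
  apply: walk_step _ hae _; last by apply: contra heS; exact: cutT_sub.
  apply: walk_mono (walk_comp hw) => z /andP [/andP [hz nz] /pbP hxz].
  apply/negP => hzT; move/negP: hx; apply; rewrite !inE xS; apply/orP; right; apply/pbP.
  apply: walk_trans (cutT_walk hzT nz) (walk_sym hxz).
have [_ hf] := outer_mono cutT_sub (hS heS).
split => // n; case: (hf n) => w [hw' hn]; exists w; split => //.
exact: walk_trans hxe hw'.
Qed.

End Cut.

End MF.
Import MF.

Module MG.
Local Open Scope fset_scope.


Lemma lexlt_trans x y z : lexlt x y -> lexlt y z -> lexlt x z.
Proof. case: x y z => [a b] [c d] [e f]; rewrite /lexlt /= => h1 h2; move: h1 h2; bsolve2. Qed.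

Lemma lexlt_total x y : x != y -> lexlt x y || lexlt y x.
Proof. case: x y => [a b] [c d]; rewrite /lexlt /= xpair_eqE => h; move: h; bsolve2. Qed.

Lemma lexlt_irr x : lexlt x x = false.
Proof. case: x => [a b]; rewrite /lexlt /=; bsolve2. Qed.

Lemma seq_max (s : seq point) x0 : x0 \in s -> exists2 v, v \in s & forall x, x \in s -> x != v -> lexlt x v.
Proof.
elim: s x0 => [|y s IH] x0 //; rewrite inE => _.
have [hs|hs] := boolP (has (fun _ => true) s).
  case/hasP: hs => x1 hx1 _; case: (IH _ hx1) => v hv hmax.
  have [e|ne] := eqVneq y v.
    exists v; first by rewrite inE hv orbT.
    move=> x; rewrite inE => /orP [/eqP -> | hx]; first by rewrite e eqxx.
    exact: hmax.
  case/orP: (lexlt_total ne) => h.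
    exists v; first by rewrite inE hv orbT.
    move=> x; rewrite inE => /orP [/eqP -> //| hx]; exact: hmax.
  exists y; first by rewrite inE eqxx.
  move=> x; rewrite inE => /orP [/eqP -> | hx]; first by rewrite eqxx.
  have [-> //|nxv] := eqVneq x v; move=> _; exact: lexlt_trans (hmax _ hx nxv) h.
move: hs; case: s {IH} => //= _; exists y; first by rewrite inE.
by move=> x; rewrite inE => /eqP ->; rewrite eqxx.
Qed.

Lemma topright_ex (S : {fset point}) x0 : x0 \in S -> exists v, topright S v.
Proof. move=> h; case: (@seq_max (S : seq point) x0 h) => v hv hm; by exists v; split. Qed.

Lemma nbr_ord w (j : nat) : exists i : 'I_6, nbr w j = nbr w i.
Proof. exists (Ordinal (ltn_pmod j (isT : (0 < 6)%N))); by rewrite /= -nbr_mod. Qed.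

Lemma outer_of (S : {fset point}) w j : holefree S -> w \in S -> nbr w j \notin S ->
  on_outer_boundary S w.
Proof.
move=> hS hw hj; split => //; case: (nbr_ord w j) => i e; exists i; rewrite -e; exact: hS.
Qed.

Lemma SCE_transfer (S T : {fset point}) w : holefree S -> (forall y, y \in T -> y \in S) ->
  (forall i, (nbr w i \in S) = (nbr w i \in T)) -> SCE T w -> SCE S w.
Proof.
move=> hS hTS hn [[[hwT hred] _] [i [k [[[_ [i0 hi0]] hi hk hout hin] hc]]]].
have hwS := hTS _ hwT.
have hP : forall u, ((u \in S) && adj w u) = ((u \in T) && adj w u).
  move=> u; case h: (adj w u); rewrite ?andbF ?andbT //.
  by case/adjP: h => j _ ->.
split; first split.
- split => // u1 u2 h1 h2; apply: walk_ext (fun u => esym (hP u)) _.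
  by apply: hred; rewrite -hP.
- apply: (@outer_of S w (i + 0)%N hS hwS); rewrite hn; apply: hout; by case/andP: hk.
- exists i, k; split => //; split => //.
  + split => //; exists i0; by rewrite hn.
  + by move=> j hj; rewrite hn; apply: hout.
  + by rewrite !hn.
Qed.

Lemma tr_nbr (S : {fset point}) v k : topright S v -> (k == 0)%N || (k == 4)%N || (k == 5)%N ->
  nbr v k \notin S.
Proof.
case=> hv hm hk; apply/negP => h.
have : lexlt (nbr v k) v.
  apply: (hm _ h); case/orP: hk => [/orP [] | ] /eqP ->; case: v {hv hm h} => q r;
  rewrite /nbr /= xpair_eqE; bsolve2.
case/orP: hk => [/orP [] | ] /eqP ->; case: v {hv hm h} => q r; rewrite /nbr /lexlt /=; bsolve2.
Qed.

Lemma adj12 v : adj (nbr v 1) (nbr v 2).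
Proof.
have -> : nbr v 2 = nbr (nbr v 1) 3 by case: v => q r; rewrite /nbr /=; congr pair; lia.
exact: adj_nbr.
Qed.
Lemma adj23 v : adj (nbr v 2) (nbr v 3).
Proof.
have -> : nbr v 3 = nbr (nbr v 2) 4 by case: v => q r; rewrite /nbr /=; congr pair; lia.
exact: adj_nbr.
Qed.

Lemma good_case (S : {fset point}) v : holefree S -> topright S v ->
  ~~ [&& nbr v 1 \in S, nbr v 3 \in S & nbr v 2 \notin S] -> SCE S v.
Proof.
move=> hS htr hgood.
have hv : v \in S by case: htr.
have n0 := @tr_nbr S v 0 htr isT; have n4 := @tr_nbr S v 4 htr isT; have n5 := @tr_nbr S v 5 htr isT.
split; first split.
- split => // u w /andP [hu /adjP [i hi eu]] /andP [hw /adjP [j hj ew]]; subst u w.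
  have P1 : forall m, nbr v m \in S -> ((nbr v m \in S) && adj v (nbr v m)).
    by move=> m ->; rewrite adj_nbr.
  case: i hi hu => [|[|[|[|[|[|i]]]]]] hi hu //; rewrite ?(negbTE n0) ?(negbTE n4) ?(negbTE n5) // in hu;
  case: j hj hw => [|[|[|[|[|[|j]]]]]] hj hw //; rewrite ?(negbTE n0) ?(negbTE n4) ?(negbTE n5) // in hw;
  try (by apply: walk_refl; apply: P1);
  try (by apply: walk_cons (adj12 v) (P1 _ hu) (walk_refl (P1 _ hw)));
  try (by apply: walk_cons (adj23 v) (P1 _ hu) (walk_refl (P1 _ hw)));
  try (by apply: walk_cons (adj_sym (adj12 v)) (P1 _ hu) (walk_refl (P1 _ hw)));
  try (by apply: walk_cons (adj_sym (adj23 v)) (P1 _ hu) (walk_refl (P1 _ hw))).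
  + have h2 : nbr v 2 \in S by move: hgood; rewrite hu hw /=; case: (nbr v 2 \in S).
    apply: walk_cons (adj12 v) (P1 _ hu) _.
    exact: walk_cons (adj23 v) (P1 _ h2) (walk_refl (P1 _ hw)).
  + have h2 : nbr v 2 \in S by move: hgood; rewrite hu hw /=; case: (nbr v 2 \in S).
    apply: walk_cons (adj_sym (adj23 v)) (P1 _ hu) _.
    exact: walk_cons (adj_sym (adj12 v)) (P1 _ h2) (walk_refl (P1 _ hw)).
- exact: (@outer_of S v 0%N).
have bp : boundary_point S v by split => //; exists ord0.
move: hgood.
case h1: (nbr v 1 \in S); case h2: (nbr v 2 \in S); case h3: (nbr v 3 \in S) => //= _.
- exists 4%N, 3%N; split => //; split => //.
  by move=> j hj; case: j hj => [|[|[|j]]] hj //.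
- exists 3%N, 4%N; split => //; split => //.
  by move=> j hj; case: j hj => [|[|[|[|j]]]] hj //; rewrite h3.
- exists 2%N, 5%N; split => //; split => //.
  by move=> j hj; case: j hj => [|[|[|[|[|j]]]]] hj //; rewrite ?h2 ?h3.
- exists 4%N, 4%N; split => //; split => //.
  by move=> j hj; case: j hj => [|[|[|[|j]]]] hj //; rewrite h1.
- exists 3%N, 5%N; split => //; split => //.
  by move=> j hj; case: j hj => [|[|[|[|[|j]]]]] hj //; rewrite ?h1 ?h3.
- exists 4%N, 5%N; split => //; split => //.
  by move=> j hj; case: j hj => [|[|[|[|[|j]]]]] hj //; rewrite ?h1 ?h2.
- exists 0%N, 6%N; split => //; split => //.
  by move=> j hj; case: j hj => [|[|[|[|[|[|j]]]]]] hj //; rewrite ?h1 ?h2 ?h3.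
Qed.

End MG.
Import MG.

Module MH.
Local Open Scope fset_scope.

Definition negp (x : point) : point := ((- x.1)%R, (- x.2)%R).

Lemma negpK : involutive negp.
Proof. by case=> a b; rewrite /negp /= !opprK. Qed.

Lemma mem_neg (S : {fset point}) x : (x \in negp @` S) = (negp x \in S).
Proof.
apply/imfsetP/idP => [[y hy ->]|h]; first by rewrite negpK.
by exists (negp x) => //; rewrite negpK.
Qed.

Lemma nbr_neg x m : nbr (negp x) m = negp (nbr x (m + 3)).
Proof.
rewrite (nbr_mod _ m) (nbr_mod x (m + 3)) -modnDml.
have : (m %% 6 < 6)%N by rewrite ltn_pmod.
case: x => a b; move: (m %% 6)%N => j.
case: j => [|[|[|[|[|[|j]]]]]] hj //; rewrite /nbr /negp /=; congr pair; lia.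
Qed.

Lemma nbr_shift w i j : nbr w ((i + 3) %% 6 + j + 3) = nbr w (i + j).
Proof. rewrite (nbr_mod _ (_ + 3)) (nbr_mod _ (i + j)); congr nbr; lia. Qed.

Lemma nbr6 w i : nbr w (i + 3 + 3) = nbr w i.
Proof. by rewrite (nbr_mod w (i + 3 + 3)) (nbr_mod w i); congr nbr; lia. Qed.

Lemma adj_neg u w : adj u w -> adj (negp u) (negp w).
Proof.
case/adjP => j _ ->.
have -> : negp (nbr u j) = nbr (negp u) (j + 3).
  by rewrite nbr_neg (nbr_mod u (j + 3 + 3)) (nbr_mod u j); congr negp; congr nbr; lia.
exact: adj_nbr.
Qed.

Lemma adj_negE u w : adj (negp u) (negp w) = adj u w.
Proof.
apply/idP/idP; last exact: adj_neg.
by move/adj_neg; rewrite !negpK.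
Qed.

Lemma walk_neg (P : pred point) u w : walk_in P u w ->
  walk_in (fun y => P (negp y)) (negp u) (negp w).
Proof.
case=> p; elim: p u => [|y p IH] u /and3P [hp hl ha].
  by move: hl => /= /eqP <-; apply: walk_refl; rewrite negpK; case/andP: ha.
move: hp ha => /= /andP [huy hp] /andP [hu ha].
apply: walk_cons (adj_neg huy) _ _; first by rewrite negpK.
apply: IH; exact/and3P.
Qed.

Section Neg.
Variable S : {fset point}.
Let S' := negp @` S.

Lemma conn_neg : shape_connected S -> shape_connected S'.
Proof.
move=> hc u w; rewrite !mem_neg => hu hw.
have := walk_neg (hc _ _ hu hw); rewrite !negpK => h.
by apply: walk_ext h => y; rewrite mem_neg.
Qed.

Lemma outer_neg x : in_outer_face S x -> in_outer_face S' (negp x).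
Proof.
case=> hx hf; split; first by rewrite mem_neg negpK.
move=> n; case: (hf n) => w [hw hn]; exists (negp w); split.
  by apply: walk_ext (walk_neg hw) => y; rewrite mem_neg.
by rewrite /negp /= !abszN.
Qed.

Lemma holefree_neg : holefree S -> holefree S'.
Proof.
move=> hS u; rewrite mem_neg => hu; rewrite -(negpK u); apply: outer_neg; exact: hS.
Qed.

Lemma mem_nbr_neg w m : (nbr (negp w) m \in S') = (nbr w (m + 3) \in S).
Proof. by rewrite nbr_neg mem_neg negpK. Qed.

Lemma SCE_neg w : SCE S w -> SCE S' (negp w).
Proof.
move=> [[[hw hred] [_ [i hi]]] [i1 [k [[[_ [i0 hi0]] hi1 hk hout hin] hc]]]].
have hw' : negp w \in S' by rewrite mem_neg negpK.
split; first split.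
- split => // u1 u2 /andP [h1 a1] /andP [h2 a2].
  have h1' : negp u1 \in S by rewrite -mem_neg.
  have h2' : negp u2 \in S by rewrite -mem_neg.
  have a1' : adj w (negp u1) by rewrite -adj_negE negpK.
  have a2' : adj w (negp u2) by rewrite -adj_negE negpK.
  have := walk_neg (hred _ _ (introT andP (conj h1' a1')) (introT andP (conj h2' a2'))).
  rewrite !negpK => hwk; apply: walk_ext hwk => y /=.
  by rewrite mem_neg -adj_negE negpK.
- split => //; case: (nbr_ord (negp w) (i + 3)) => j e; exists j; rewrite -e.
  rewrite nbr_neg; apply: outer_neg.
  by rewrite nbr6.
exists ((i1 + 3) %% 6)%N, k; split => //; split => //.
- split => //; case: (nbr_ord (negp w) (i0 + 3)) => j e; exists j; rewrite -e.
  by rewrite mem_nbr_neg nbr6.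
- by rewrite ltn_pmod.
- by move=> j hj; rewrite mem_nbr_neg nbr_shift; apply: hout.
- move=> h6; case: (hin h6) => hA hB.
  by rewrite !mem_nbr_neg !nbr_shift.
Qed.

End Neg.

End MH.
Import MH.

Module MI.
Local Open Scope fset_scope.

Lemma card_neg (S : {fset point}) : #|` negp @` S| = #|` S|.
Proof. rewrite card_imfset //; exact: (can_inj negpK). Qed.

Lemma negneg (S : {fset point}) : negp @` (negp @` S) = S.
Proof. by apply/fsetP => x; rewrite !mem_neg negpK. Qed.

Lemma two_elems (S : {fset point}) : (2 <= #|` S|)%N -> exists x y, [/\ x \in S, y \in S & x != y].
Proof.
move=> h; have : S != fset0 by rewrite -cardfs_gt0; lia.
case/fset0Pn => x hx.
have : S `\ x != fset0 by rewrite -cardfs_gt0; move: h; rewrite (cardfsD1 x S) hx; lia.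
case/fset0Pn => y /fsetD1P [hyx hy]; exists x, y; split => //; by rewrite eq_sym.
Qed.

Lemma lexlt_neg y v : lexlt (negp y) (negp v) = lexlt v y.
Proof. case: y v => [a b] [c d]; rewrite /lexlt /negp /=; bsolve2. Qed.

Definition Q (S : {fset point}) := exists w1 w2, [/\ w1 != w2, w1 \in S, w2 \in S, SCE S w1 & SCE S w2].

Lemma pick_ne (T : {fset point}) v : Q T -> exists2 w, w \in T & (w != v) && pb (SCE T w).
Proof.
case=> w1 [w2 [ne h1 h2 s1 s2]].
have [e|n1] := eqVneq w1 v.
  exists w2 => //; apply/andP; split; first by rewrite -e eq_sym.
  by apply/pbP.
by exists w1 => //; rewrite n1 /=; apply/pbP.
Qed.

Lemma adj_10 v : adj (nbr v 1) (nbr v 0).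
Proof.
have -> : nbr v 0 = nbr (nbr v 1) 5 by case: v => q r; rewrite /nbr /=; congr pair; lia.
exact: adj_nbr.
Qed.
Lemma adj_34 v : adj (nbr v 3) (nbr v 4).
Proof.
have -> : nbr v 4 = nbr (nbr v 3) 5 by case: v => q r; rewrite /nbr /=; congr pair; lia.
exact: adj_nbr.
Qed.
Lemma nbr_ne v k : (0 < k < 6)%N -> nbr v k != v.
Proof.
case: k => [|[|[|[|[|[|k]]]]]] //= _; case: v => q r; rewrite /nbr /= xpair_eqE; bsolve2.
Qed.

Lemma step_top (S : {fset point}) :
  (forall T : {fset point}, (#|` T| < #|` S|)%N -> shape_connected T -> holefree T ->
     (2 <= #|` T|)%N -> Q T) ->
  shape_connected S -> holefree S -> forall v, topright S v -> SCE S v \/ Q S.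
Proof.
move=> IH hc hS v htr.
case hb: [&& nbr v 1 \in S, nbr v 3 \in S & nbr v 2 \notin S]; last first.
  by left; apply: good_case => //; rewrite hb.
right; case/and3P: hb => ha hb hu.
have hv : v \in S by case: htr.
have hsep := bad_sep hS htr hu.
have hav : nbr v 1 != v by apply: nbr_ne.
have hbv : nbr v 3 != v by apply: nbr_ne.
have hN : forall y, y \in S -> adj v y -> y = nbr v 1 \/ y = nbr v 3.
  move=> y hy /adjP [j hj ey]; subst y.
  case: j hj hy => [|[|[|[|[|[|j]]]]]] hj hy //; [ | by left | | by right | | ].
  - by move: (@tr_nbr S v 0 htr isT); rewrite hy.
  - by move: hu; rewrite hy.
  - by move: (@tr_nbr S v 4 htr isT); rewrite hy.
  - by move: (@tr_nbr S v 5 htr isT); rewrite hy.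
have hN' : forall y, y \in S -> adj v y -> y = nbr v 3 \/ y = nbr v 1.
  by move=> y hy hvy; case: (hN y hy hvy); [right|left].
have hsep' : ~ walk_in (fun x => (x \in S) && (x != v)) (nbr v 3) (nbr v 1).
  by move/walk_sym.
have e0 := @tr_nbr S v 0 htr isT; have e4 := @tr_nbr S v 4 htr isT.
set TB := cutT S v (nbr v 3).
set TA := cutT S v (nbr v 1).
have cB := cutT_card hv ha hav hb hbv hsep.
have cA := cutT_card hv hb hbv ha hav hsep'.
have QB : Q TB.
  apply: IH; first by case/andP: cB.
  - exact: cutT_conn hv (adj_nbr v 3).
  - exact: (@cutT_holefree S v (nbr v 1) (nbr v 3) (nbr v 0) hS hc hv hN (adj_10 v) e0).
  - by case/andP: cB.
have QA : Q TA.
  apply: IH; first by case/andP: cA.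
  - exact: cutT_conn hv (adj_nbr v 1).
  - exact: (@cutT_holefree S v (nbr v 3) (nbr v 1) (nbr v 4) hS hc hv hN' (adj_34 v) e4).
  - by case/andP: cA.
have transfer : forall b w, w \in cutT S v b -> w != v -> SCE (cutT S v b) w -> SCE S w.
  move=> b' w hw nw; apply: SCE_transfer => //; first by move=> y; apply: cutT_sub.
  by move=> i; apply: cutT_nbr.
case: (pick_ne v QB) => wB hwB /andP [nB /pbP sB].
case: (pick_ne v QA) => wA hwA /andP [nA /pbP sA].
exists wA, wB; split.
- apply/negP => /eqP e; apply: hsep; subst wB.
  exact: (walk_trans (cutT_walk hwA nA) (walk_sym (cutT_walk hwB nB))).
- exact: cutT_sub hwA.
- exact: cutT_sub hwB.
- exact: transfer hwA nA sA.
- exact: transfer hwB nB sB.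
Qed.

Lemma Q_neg (S : {fset point}) : Q (negp @` S) -> Q S.
Proof.
case=> w1 [w2 [ne h1 h2 s1 s2]]; exists (negp w1), (negp w2); split.
- by apply: contra ne => /eqP /(can_inj negpK) ->.
- by rewrite -mem_neg.
- by rewrite -mem_neg.
- by rewrite -(negneg S); apply: SCE_neg.
- by rewrite -(negneg S); apply: SCE_neg.
Qed.

Lemma mainQ n : forall S : {fset point}, (#|` S| <= n)%N -> shape_connected S -> holefree S ->
  (2 <= #|` S|)%N -> Q S.
Proof.
elim: n => [|n IHn] S hn hc hS h2; first lia.
have IH : forall T : {fset point}, (#|` T| < #|` S|)%N -> shape_connected T -> holefree T ->
     (2 <= #|` T|)%N -> Q T.
  move=> T hT; apply: IHn; lia.
case: (two_elems h2) => x [y [hx hy nxy]].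
case: (topright_ex hx) => v htr.
have hx' : negp x \in negp @` S by rewrite mem_neg negpK.
case: (topright_ex hx') => v' htr'.
case: (step_top IH hc hS htr) => [sv|] //.
have IH' : forall T : {fset point}, (#|` T| < #|` negp @` S|)%N -> shape_connected T -> holefree T ->
     (2 <= #|` T|)%N -> Q T by rewrite card_neg.
case: (step_top IH' (conn_neg hc) (holefree_neg hS) htr') => [sv'|]; last exact: Q_neg.
have sv2 : SCE S (negp v') by rewrite -(negneg S); apply: SCE_neg.
have hv : v \in S by case: htr.
have hv' : negp v' \in S by rewrite -mem_neg; case: htr'.
exists v, (negp v'); split => //.
apply/negP => /eqP e.
have [z [hz nzv]] : exists z, z \in S /\ z != v.
  have [e1|ne1] := eqVneq x v; last by exists x.
  by exists y; split => //; rewrite -e1 eq_sym.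
have l1 := htr.2 z hz nzv.
have : lexlt (negp z) v'.
  apply: htr'.2; first by rewrite mem_neg negpK.
  by apply: contra nzv => /eqP h; rewrite -(negpK z) h e.
rewrite -{1}(negpK v') lexlt_neg -e => l2.
by move: (lexlt_trans l1 l2); rewrite lexlt_irr.
Qed.


End MI.
Import MI.

Local Open Scope fset_scope.

Theorem proposition2p3 (S : {fset point}) :
  simply_connected S -> (2 <= #|` S|)%N -> exists v, v \in S /\ SCE S v.
Proof.
case=> hc hh h2.
have hS : holefree S.
  move=> u hu; apply: NNPP => ho; apply: hh; by exists u.
case: (mainQ (leqnn _) hc hS h2) => w1 [w2 [_ h1 _ s1 _]].
by exists w1.
Qed.
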